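(* Let $q$ be a prime power and let $n,k$ be integers with $3\le k\le\frac{n-2}{2}$, $n\le q$ and $k\le q-2$. Let $\alpha_1,\dots,\alpha_n\in\mathbb{F}_q$ be pairwise distinct and let $C_{k,k}$ be the linear code generated by the $k\times n$ matrix whose rows are $(\alpha_1^{e},\dots,\alpha_n^{e})$ for $e=0,1,\dots,k-2$ and $e=k$. If $C_{k,k}$ is an MDS code, then it is a non-GRS MDS code.
   Context: Convention: $0^0=1$. A linear code is MDS if its parameters $[n,k,d]$ satisfy $d=n-k+1$. For pairwise distinct $a_1,\dots,a_n\in\mathbb{F}_q$ and $w\in(\mathbb{F}_q^* )^n$, $GRS(n,k,\{a_i\},w)=\{(w_1f(a_1),\dots,w_nf(a_n)) : f\in\mathbb{F}_q[x],\ \deg f\le k-1\}$. Two codes are (monomially) equivalent if one is obtained from the other by permuting coordinates and scaling coordinates by nonzero scalars. A non-GRS MDS code is an MDS code not equivalent to any GRS code. *)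

(* Defs.v *)
From HB Require Import structures.
From mathcomp Require Import all_boot all_order all_algebra all_fingroup all_field.
Set Implicit Arguments. Unset Strict Implicit. Unset Printing Implicit Defensive.
Import GRing.Theory.
Local Open Scope ring_scope.

Definition code (F : fieldType) (n : nat) := 'rV[F]_n -> Prop.

Definition code_of (F : fieldType) (k n : nat) (G : 'M[F]_(k, n)) : code F n :=
  fun v => (v <= G)%MS.

Definition wt (F : fieldType) (n : nat) (v : 'rV[F]_n) : nat :=
  #|[set j : 'I_n | v 0 j != 0]|.

Definition has_min_dist (F : fieldType) (n : nat) (C : code F n) (d : nat) : Prop :=
  (exists2 c, C c & c != 0 /\ wt c = d) /\
  (forall c, C c -> c != 0 -> (d <= wt c)%N).

Definition is_MDS (F : fieldType) (k n : nat) (G : 'M[F]_(k, n)) : Prop :=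
  has_min_dist (code_of G) (n - \rank G + 1).

Definition GRS (F : fieldType) (n k : nat) (a w : 'I_n -> F) : code F n :=
  fun v => exists f : {poly F}, (size f <= k)%N /\ v = \row_i (w i * f.[a i]).

Definition mon_equiv (F : fieldType) (n : nat) (C1 C2 : code F n) : Prop :=
  exists (s : 'S_n) (u : 'I_n -> F), (forall i, u i != 0) /\
    forall v, C2 v <-> exists2 c, C1 c & v = \row_i (u i * c 0 (s i)).

Definition is_GRS_equiv (F : fieldType) (n : nat) (C : code F n) : Prop :=
  exists (k : nat) (a w : 'I_n -> F),
    injective a /\ (forall i, w i != 0) /\ mon_equiv (GRS k a w) C.

Definition Ckk_gen (F : fieldType) (n k : nat) (alpha : 'I_n -> F) : 'M[F]_(k, n) :=
  \matrix_(i < k, j < n) alpha j ^+ (if (i < k.-1)%N then (i : nat) else k).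

(* Main.v *)
Require Import Defs.
From HB Require Import structures.
From mathcomp Require Import all_boot all_order all_algebra all_fingroup all_field.
From mathcomp Require Import zify.
Set Implicit Arguments. Unset Strict Implicit. Unset Printing Implicit Defensive.
Import GRing.Theory.
Local Open Scope ring_scope.

Lemma vander_free (F : fieldType) (m n : nat) (e : 'I_m -> nat) (b t : 'I_n -> F) :
  injective e -> (forall i, e i < n)%N -> injective b -> (forall j, t j != 0) ->
  \rank (\matrix_(i < m, j < n) (t j * b j ^+ e i)) = m.
Proof.
move=> einj elt binj tnz.
set A := \matrix_(i < m, j < n) _.
have Hker : forall v : 'rV_m, v *m A = 0 -> v = 0.
  move=> v Hv.
  pose p := \sum_(i < m) v 0 i *: 'X^(e i).
  have Hroot : forall j, p.[b j] = 0.
    move=> j; have := congr1 (fun M : 'M[F]_(1,n) => M 0 j) Hv; rewrite mxE [X in _ = X -> _]mxE.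
    move=> H.
    have : \sum_(i < m) t j * (v 0 i * b j ^+ e i) = 0.
      apply: (etrans _ H). by apply: (@eq_bigr _ _ _ 'I_m) => i _; rewrite /A mxE mulrCA.
    rewrite /p horner_sum.
    rewrite -mulr_sumr => /eqP; rewrite mulf_eq0 (negbTE (tnz j)) /= => /eqP H0.
    by apply: (etrans _ H0); apply: (@eq_bigr _ _ _ 'I_m) => i _; rewrite hornerZ hornerXn.
  have Hsize : (size p <= n)%N.
    apply: leq_trans (size_sum _ _ _) _.
    apply/bigmax_leqP => i _.
    apply: leq_trans (size_scale_leq _ _) _.
    by rewrite size_polyXn.
  have p0 : p = 0.
    apply/eqP; apply/negPn/negP => pn0.
    have := max_poly_roots pn0 (rs := [seq b j | j <- enum 'I_n]).
    rewrite size_map size_enum_ord.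
    have -> : all (root p) [seq b j | j <- enum 'I_n].
      by apply/allP => x /mapP [j _ ->]; rewrite /root Hroot.
    rewrite map_inj_uniq // enum_uniq => /(_ isT isT).
    by rewrite ltnNge Hsize.
  apply/rowP => i; rewrite mxE.
  have := congr1 (fun q : {poly F} => q`_(e i)) p0.
  rewrite coef0 /p coef_sum => <-.
  rewrite (bigD1 i) //= coefZ coefXn eqxx mulr1 big1 ?addr0 // => l hl.
  rewrite coefZ coefXn.
  case: eqP => [/einj h|]; last by rewrite mulr0.
  by rewrite h eqxx in hl.
have K0 : kermx A = 0.
  apply/row_matrixP => i; rewrite row0; apply: Hker; apply/eqP.
  by rewrite -sub_kermx row_sub.
have := mxrank_ker A; rewrite K0 mxrank0 => h.
have := rank_leq_row A. lia.
Qed.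

Lemma decomp (k e : nat) : (3 <= k)%N -> (e <= k.*2 - 2 \/ e = k.*2)%N ->
  exists i1 i2 : nat, [/\ (i1 < k)%N, (i2 < k)%N &
    ((if (i1 < k.-1)%N then i1 else k) + (if (i2 < k.-1)%N then i2 else k))%N = e].
Proof.
move=> hk [he|he].
- case: (leqP e (k - 2)) => h1.
    exists e, 0%N; split; [lia|lia|]; case: ifP => ?; case: ifP => ?; lia.
  case: (leqP e (k.*2 - 4)) => h2.
    exists (k - 2)%N, (e - (k - 2))%N; split; [lia|lia|]; case: ifP => ?; case: ifP => ?; lia.
  exists (e - k)%N, k.-1; split; [lia|lia|]; case: ifP => ?; case: ifP => ?; lia.
- exists k.-1, k.-1; split; [lia|lia|]; case: ifP => ?; lia.
Qed.

Theorem proposition4p3 (F : finFieldType) (n k : nat) (alpha : 'I_n -> F) :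
  (3 <= k)%N -> (k.*2 <= n - 2)%N -> (n <= #|F|)%N -> (k <= #|F| - 2)%N ->
  injective alpha ->
  is_MDS (Ckk_gen k alpha) ->
  is_MDS (Ckk_gen k alpha) /\ ~ is_GRS_equiv (code_of (Ckk_gen k alpha)).
Proof.
move=> hk hn hq hkq ainj HM; split => //.
case=> k' [a [w [ainj' [wnz [s [u [unz Heq]]]]]]].
set G := Ckk_gen k alpha.
pose b j := a (s j). pose t j := u j * w (s j).
have binj : injective b by move=> x y /ainj' /perm_inj.
have tnz : forall j, t j != 0 by move=> j; rewrite mulf_neq0.
have Hin : forall f : {poly F}, (size f <= k')%N -> ((\row_j (t j * f.[b j]))%R <= G)%MS.
  move=> f hf; apply: (proj2 (Heq _)).
  exists (\row_i (w i * f.[a i])); first by exists f.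
  by apply/rowP => j; rewrite !mxE mulrA.
have Hrow : forall i : 'I_k, exists f : {poly F}, (size f <= k')%N &&
    [forall j, alpha j ^+ (if (i < k.-1)%N then (i : nat) else k) == t j * f.[b j]].
  move=> i; have [c [f [hf ->]] hr] := (Heq (row i G)).1 (row_sub i G).
  exists f; rewrite hf /=; apply/forallP => j.
  have := congr1 (fun M : 'M[F]_(1,n) => M 0 j) hr; rewrite /G /Ckk_gen !mxE => ->.
  by rewrite mulrA.
pose fs i := xchoose (Hrow i).
have Hfs : forall i, (size (fs i) <= k')%N /\
    forall j, alpha j ^+ (if (i < k.-1)%N then (i : nat) else k) = t j * (fs i).[b j].
  move=> i; have /andP [h1 /forallP h2] := xchooseP (Hrow i).
  by split => // j; apply/eqP/h2.
have k'k : (k' <= k)%N.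
  rewrite leqNgt; apply/negP => hlt.
  pose A := \matrix_(i < k.+1, j < n) (t j * b j ^+ (i : nat)).
  have sAG : (A <= G)%MS.
    apply/row_subP => i.
    have -> : row i A = \row_j (t j * ('X^i).[b j]).
      by apply/rowP => j; rewrite !mxE hornerXn.
    apply: Hin; rewrite size_polyXn; have := ltn_ord i; lia.
  have r1 : \rank A = k.+1.
    apply: (vander_free (e := fun i : 'I_k.+1 => nat_of_ord i)) => //.
    - exact: ord_inj.
    - move=> i; have := ltn_ord i; lia.
  have := mxrankS sAG; have := rank_leq_row G; lia.
pose e2 (i : 'I_(k.*2)) : nat := if (i < k.*2.-1)%N then (i : nat) else k.*2.
pose M2 := \matrix_(i < k.*2, j < n) (1 * alpha j ^+ e2 i).
pose T := \matrix_(l < k.*2.-1, j < n) (t j ^+ 2 * b j ^+ (l : nat)).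
have HT : forall h : {poly F}, (size h <= k.*2.-1)%N ->
    ((\row_j (t j ^+ 2 * h.[b j]))%R <= T)%MS.
  move=> h hh.
  have -> : \row_j (t j ^+ 2 * h.[b j]) = (\row_(l < k.*2.-1) h`_l) *m T.
    apply/rowP => j; rewrite !mxE (horner_coef_wide _ hh) mulr_sumr.
    by apply: (@eq_bigr _ _ _ 'I_(k.*2.-1)) => l _; rewrite !mxE mulrCA.
  exact: submxMl.
have sMT : (M2 <= T)%MS.
  apply/row_subP => i.
  have [i1 [i2 [h1 h2 h3]]] : exists i1 i2 : nat, [/\ (i1 < k)%N, (i2 < k)%N &
    ((if (i1 < k.-1)%N then i1 else k) + (if (i2 < k.-1)%N then i2 else k))%N = e2 i].
    apply: decomp => //; rewrite /e2; have := ltn_ord i; case: ifP => ? ?; [left|right]; lia.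
  pose o1 : 'I_k := Ordinal h1. pose o2 : 'I_k := Ordinal h2.
  have -> : row i M2 = \row_j (t j ^+ 2 * (fs o1 * fs o2).[b j]).
    apply/rowP => j; rewrite !mxE hornerM -h3 exprD mul1r.
    rewrite (proj2 (Hfs o1)) (proj2 (Hfs o2)).
    by rewrite mulrACA expr2.
  apply: HT; apply: leq_trans (size_polyMleq _ _) _.
  have := (Hfs o1).1; have := (Hfs o2).1; lia.
have r2 : \rank M2 = k.*2.
  apply: (vander_free (e := e2) (t := fun _ => 1)) => //.
  - move=> x y; rewrite /e2 => exy; apply: ord_inj; move: exy.
    have := ltn_ord x; have := ltn_ord y.
    case: ifP => ?; case: ifP => ?; lia.
  - move=> x; rewrite /e2; have := ltn_ord x; case: ifP => ? ?; lia.
  - by move=> _; apply: oner_neq0.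
have := mxrankS sMT; have := rank_leq_row T; lia.
Qed.
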